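(* Let $N_0,B,T_c,G_c,p_r,p_d,p_s,C_0>0$ and $\alpha>1$, with $T=BT_c$ an integer greater than $1$, and let $R>0$. Set $\rho_r=\frac{G_cp_r}{N_0B}$, $\rho_d=\frac{G_cp_d}{N_0B}$, $\rho_s=\frac{G_cp_s}{N_0B}$, $\rho_0=\frac{G_cC_0}{N_0}$, $\Theta=(\alpha,\rho_r,\rho_d,\rho_s,\rho_0,T)$. Suppose $$\rho_r+2\rho_0\ \ge\ \frac{\alpha}{1+\lfloor\sqrt T\rfloor}+\frac{\alpha(1+\lfloor\sqrt T\rfloor)}{\lfloor\sqrt T\rfloor}\Big(2^{\frac{R}{1-\lfloor\sqrt T\rfloor/T}}-1\Big).$$ Let $\eta^\star_{zf}(R,\Theta)=\frac{G_c}{N_0}\zeta^\star_{zf}(R,\Theta)$ and $$e(R,\Theta)=\frac{RB}{2p_r+p_d+p_s+4C_0B+\frac{32}{3}\frac{C_0}{T_c}}.$$ Then $\frac23 e(R,\Theta)<\eta^\star_{zf}(R,\Theta)<e(R,\Theta)$.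
   Context: For $M>K$, $1\le K\le\tau<T$ let $$\gamma_u=\frac{K+\tau}{2\tau(M-K)}\Big(2^{\frac{R}{K(1-\tau/T)}}-1\Big)+\sqrt{\Big(\frac{K+\tau}{2\tau(M-K)}\Big(2^{\frac{R}{K(1-\tau/T)}}-1\Big)\Big)^2+\frac{2^{\frac{R}{K(1-\tau/T)}}-1}{\tau(M-K)}}$$ and define $\zeta_{zf}(M,K,\tau,R,\Theta)>0$ by $$\frac{R}{\zeta_{zf}(M,K,\tau,R,\Theta)}=\alpha K\gamma_u+\rho_s+K\Big(\rho_d+\frac{8K^2\rho_0}{3T}\Big)+M\Big(\rho_r+2K\rho_0+\frac{4K^2\rho_0}{T}\Big).$$ $\zeta^\star_{zf}(R,\Theta)$ is the maximum of $\zeta_{zf}$ over integers $(M,K,\tau)$ with $1\le K\le\tau<T$, $M>K$. *)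

(* Defs.v *)
From HB Require Import structures.
From mathcomp Require Import all_boot all_order all_algebra.
From mathcomp Require Import all_classical all_reals all_analysis.
Set Implicit Arguments. Unset Strict Implicit. Unset Printing Implicit Defensive.
Import Order.TTheory GRing.Theory Num.Theory.
Local Open Scope ring_scope.
Local Open Scope classical_set_scope.

Section Defs.
Variable R : realType.

Definition snr_term (Rt : R) (K tau : nat) (T : R) : R :=
  2 `^ (Rt / (K%:R * (1 - tau%:R / T))) - 1.

Definition gamma_u (M K tau : nat) (Rt T : R) : R :=
  let a := (K%:R + tau%:R) / (2 * tau%:R * (M%:R - K%:R)) * snr_term Rt K tau T in
  a + Num.sqrt (a ^+ 2 + snr_term Rt K tau T / (tau%:R * (M%:R - K%:R))).

Definition zeta_zf (M K tau : nat) (Rt alpha rho_r rho_d rho_s rho_0 T : R) : R :=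
  Rt / (alpha * K%:R * gamma_u M K tau Rt T + rho_s
        + K%:R * (rho_d + 8 * K%:R ^+ 2 * rho_0 / (3 * T))
        + M%:R * (rho_r + 2 * K%:R * rho_0 + 4 * K%:R ^+ 2 * rho_0 / T)).

Definition admissible (M K tau T : nat) : Prop :=
  (1 <= K)%N /\ (K <= tau)%N /\ (tau < T)%N /\ (K < M)%N.

(* zeta*_zf: the maximum of zeta_zf over admissible triples, written as the
   supremum of the set of attained values. *)
Definition zeta_star (Rt alpha rho_r rho_d rho_s rho_0 : R) (T : nat) : R :=
  sup [set z : R | exists M K tau : nat, admissible M K tau T /\
        z = zeta_zf M K tau Rt alpha rho_r rho_d rho_s rho_0 T%:R].

End Defs.

(* Main.v *)
Require Import Defs.
From HB Require Import structures.
From mathcomp Require Import all_boot all_order all_algebra.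
From mathcomp Require Import all_classical all_reals all_analysis.
From mathcomp Require Import ring lra.
Import Order.TTheory GRing.Theory Num.Theory.
Local Open Scope ring_scope.
Set Implicit Arguments. Unset Strict Implicit.

Lemma two_pow_gt1 (R : realType) (x : R) : 0 < x -> 1 < 2 `^ x.
Proof.
move=> hx; rewrite lt_neqAle; apply/andP; split.
  rewrite eq_sym powR_eq1 negb_or negb_or -leNgt ler0n.
  apply/andP; split; last by rewrite gt_eqF.
  by apply/negP => /eqP; lra.
have h2 : (1:R) <= 2 by lra.
have := ler_powR h2 (ltW hx); by rewrite powRr0.
Qed.

Lemma expo_ge (R : realType) (Rt t Tr : R) :
  0 < Rt -> 0 <= t -> t < Tr -> Rt <= Rt / (1 * (1 - t / Tr)).
Proof.
move=> hR ht htT.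
have hTr : 0 < Tr by apply: le_lt_trans htT.
have h1 : 0 < 1 - t / Tr by rewrite subr_gt0 ltr_pdivrMr // mul1r.
have h2 : 1 - t / Tr <= 1 by rewrite lerBlDr lerDl divr_ge0 // ltW.
rewrite mul1r ler_pdivlMr //; nra.
Qed.

Lemma snr_ge (R : realType) (Rt : R) (K tau T : nat) :
  0 < Rt -> (1 <= K)%N -> (tau < T)%N -> 0 <= snr_term Rt K tau T%:R.
Proof.
move=> hR hK htT; rewrite /snr_term subr_ge0.
have h2 : (1:R) <= 2 by lra.
suff hh : 0 <= Rt / (K%:R * (1 - tau%:R / T%:R)).
  by have := ler_powR h2 hh; rewrite powRr0.
have hTr : 0 < (T%:R : R) by rewrite ltr0n; apply: leq_ltn_trans htT.
have h1 : 0 < 1 - tau%:R / (T%:R : R).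
  by rewrite subr_gt0 ltr_pdivrMr // mul1r ltr_nat.
apply: divr_ge0; first exact: ltW.
by apply: mulr_ge0; [rewrite ler0n | exact: ltW].
Qed.

Lemma snr_ge1 (R : realType) (Rt : R) (tau T : nat) :
  0 < Rt -> (tau < T)%N -> 2 `^ Rt - 1 <= snr_term Rt 1 tau T%:R.
Proof.
move=> hR htT; rewrite /snr_term lerD2r.
have h2 : (1:R) <= 2 by lra.
apply: ler_powR => //.
apply: expo_ge => //; by rewrite ltr_nat.
Qed.

Lemma gamma_ge0 (R : realType) (Rt : R) (M K tau T : nat) :
  0 < Rt -> (1 <= K)%N -> (K < M)%N -> (1 <= tau)%N -> (tau < T)%N ->
  0 <= gamma_u M K tau Rt T%:R.
Proof.
move=> hR hK hKM ht htT; rewrite /gamma_u /=.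
have hx := snr_ge hR hK htT.
have hMK : 0 < (M%:R : R) - K%:R by rewrite subr_gt0 ltr_nat.
have htr : 0 < (tau%:R : R) by rewrite ltr0n.
apply: addr_ge0; last exact: sqrtr_ge0.
apply: mulr_ge0 => //; apply: divr_ge0; first by rewrite addr_ge0 // ler0n.
by apply: mulr_ge0; [apply: mulr_ge0; [lra|exact: ltW]|exact: ltW].
Qed.

Lemma gamma_21_lb (R : realType) (Rt : R) (tau T : nat) :
  0 < Rt -> (1 <= tau)%N -> (tau < T)%N ->
  (2 `^ Rt - 1) / 2 <= gamma_u 2 1 tau Rt T%:R.
Proof.
move=> hR ht htT; rewrite /gamma_u /=.
have hx := snr_ge1 hR htT.
have hx0 : 0 <= 2 `^ Rt - 1 by have := two_pow_gt1 hR; lra.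
have htr : 1 <= (tau%:R : R) by rewrite ler1n.
set x := snr_term Rt 1 tau T%:R in hx *.
have -> : ((1%:R : R) + tau%:R) / (2 * tau%:R * (2%:R - 1%:R)) * x
   = x / 2 + x / (2 * tau%:R).
  have ht0 : (tau%:R : R) != 0 by apply/negP => /eqP; lra.
  rewrite (_ : (2%:R : R) - 1%:R = 1); last by rewrite -natrB.
  by field.
have h1 : 0 <= x / (2 * tau%:R) by apply: divr_ge0; lra.
have h2 := sqrtr_ge0 ((x / 2 + x / (2 * tau%:R)) ^+ 2 + x / (tau%:R * (2%:R - 1%:R))).
lra.
Qed.

Lemma gamma_21_ub (R : realType) (Rt : R) (tau T : nat) :
  0 < Rt -> (1 <= tau)%N -> (tau < T)%N ->
  gamma_u 2 1 tau Rt T%:R <=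
   (1 + tau%:R) / tau%:R * snr_term Rt 1 tau T%:R + 1 / (1 + tau%:R).
Proof.
move=> hR ht htT; rewrite /gamma_u /=.
have hx := snr_ge1 hR htT.
have hx0 : 0 <= 2 `^ Rt - 1 by have := two_pow_gt1 hR; lra.
have htr : 1 <= (tau%:R : R) by rewrite ler1n.
set x := snr_term Rt 1 tau T%:R in hx *.
have ht0 : (tau%:R : R) != 0 by apply/negP => /eqP; lra.
have ht1 : (1 + tau%:R : R) != 0 by apply/negP => /eqP; lra.
rewrite (_ : (2%:R : R) - 1%:R = 1); last by rewrite -natrB.
set a := (1%:R + tau%:R) / (2 * tau%:R * 1) * x.
set c := 1 / (1 + tau%:R : R).
have ha : 0 <= a.
  apply: mulr_ge0; last lra.
  apply: divr_ge0; first by rewrite addr_ge0 // ler0n.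
  rewrite mulr1; lra.
have hc : 0 <= c by apply: divr_ge0; lra.
have hac : x / (tau%:R * 1) = 2 * a * c.
by rewrite /a /c; field; rewrite ?ht0 ?ht1.
have hsq : Num.sqrt (a ^+ 2 + x / (tau%:R * 1)) <= a + c.
  rewrite -(ger0_norm (addr_ge0 ha hc)) -sqrtr_sqr ler_sqrt; last exact: sqr_ge0.
  rewrite hac sqrrD; have := sqr_ge0 c; lra.
have h2a : 2 * a = (1 + tau%:R) / tau%:R * x by rewrite /a; field; rewrite ?ht0 ?ht1.
lra.
Qed.

Lemma D_lb (R : realType) (alpha rho_r rho_d rho_s rho_0 Tr g : R) (M K : nat) :
  0 < alpha -> 0 < rho_r -> 0 < rho_d -> 0 < rho_s -> 0 < rho_0 -> 0 < Tr ->
  (1 <= K)%N -> (K < M)%N -> 0 <= g ->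
  2 * rho_r + rho_d + rho_s + 4 * rho_0 + 32 / 3 * (rho_0 / Tr)
    + alpha * K%:R * g + (M%:R - 2) * rho_r <=
  alpha * K%:R * g + rho_s
        + K%:R * (rho_d + 8 * K%:R ^+ 2 * rho_0 / (3 * Tr))
        + M%:R * (rho_r + 2 * K%:R * rho_0 + 4 * K%:R ^+ 2 * rho_0 / Tr).
Proof.
move=> ha hr hd hs h0 hT hK hKM hg.
have hk : 1 <= (K%:R : R) by rewrite ler1n.
have hm : (K.+1%:R : R) <= M%:R by rewrite ler_nat.
rewrite -natr1 in hm.
set k := (K%:R : R) in hk hm *; set m := (M%:R : R) in hm *.
set r := rho_0 / Tr.
have hr0 : 0 <= r by apply: divr_ge0; lra.
have hT0 : Tr != 0 by apply/negP => /eqP; lra.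
have -> : k * (rho_d + 8 * k ^+ 2 * rho_0 / (3 * Tr)) = k * rho_d + 8 / 3 * (k ^+ 3 * r).
  by rewrite /r; field; rewrite hT0.
have -> : m * (rho_r + 2 * k * rho_0 + 4 * k ^+ 2 * rho_0 / Tr)
   = m * rho_r + 2 * (m * k * rho_0) + 4 * (m * k ^+ 2 * r).
  by rewrite /r; field; rewrite hT0.
have h1 : rho_d <= k * rho_d by nra.
have hmk : 2 <= m * k by nra.
have h2 : 2 * rho_0 <= m * k * rho_0 by nra.
have hk3 : 1 <= k ^+ 3 by rewrite exprS; nra.
have h3 : r <= k ^+ 3 * r by nra.
have hmk2 : 2 <= m * k ^+ 2 by rewrite expr2; nra.
have h4 : 2 * r <= m * k ^+ 2 * r by nra.
lra.
Qed.

Lemma div_le (R : realType) (a x y : R) : 0 <= a -> 0 < x -> x <= y -> a / y <= a / x.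
Proof.
move=> ha hx hxy; apply: ler_wpM2l => //.
by rewrite lef_pV2 // posrE //; apply: lt_le_trans hxy.
Qed.

Lemma div_lt (R : realType) (a x y : R) : 0 < a -> 0 < x -> x < y -> a / y < a / x.
Proof.
move=> ha hx hxy; rewrite ltr_pM2l //.
by rewrite ltf_pV2 // posrE //; apply: lt_trans hxy.
Qed.

Unset Implicit Arguments.

Theorem theorem3 (R : realType) (N0 B Tc Gc pr pd ps C0 alpha Rt : R) (T : nat)
  (hN0 : 0 < N0) (hB : 0 < B) (hTc : 0 < Tc) (hGc : 0 < Gc) (hpr : 0 < pr)
  (hpd : 0 < pd) (hps : 0 < ps) (hC0 : 0 < C0) (halpha : 1 < alpha)
  (hT : T%:R = B * Tc) (hT1 : (1 < T)%N) (hR : 0 < Rt)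
  (hcond : let rho_r := Gc * pr / (N0 * B) in
           let rho_0 := Gc * C0 / N0 in
           let s : R := (Num.floor (Num.sqrt (T%:R : R)))%:~R in
           rho_r + 2 * rho_0 >=
             alpha / (1 + s)
             + alpha * (1 + s) / s * (2 `^ (Rt / (1 - s / T%:R)) - 1)) :
  let rho_r := Gc * pr / (N0 * B) in
  let rho_d := Gc * pd / (N0 * B) in
  let rho_s := Gc * ps / (N0 * B) in
  let rho_0 := Gc * C0 / N0 in
  let eta_star := Gc / N0 * zeta_star Rt alpha rho_r rho_d rho_s rho_0 T in
  let e := Rt * B / (2 * pr + pd + ps + 4 * C0 * B + 32 / 3 * (C0 / Tc)) in
  2 / 3 * e < eta_star /\ eta_star < e.
Proof.
cbv zeta in hcond.
move=> rho_r rho_d rho_s rho_0 eta_star e.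
have hr : 0 < rho_r by apply: divr_gt0; apply: mulr_gt0.
have hd : 0 < rho_d by apply: divr_gt0; apply: mulr_gt0.
have hs : 0 < rho_s by apply: divr_gt0; apply: mulr_gt0.
have h0 : 0 < rho_0 by apply: divr_gt0 => //; apply: mulr_gt0.
set Tr : R := T%:R in hcond hT *.
have hTr : 0 < Tr by rewrite hT mulr_gt0.
have hTr1 : 1 < Tr by rewrite /Tr ltr1n.
set D0 := 2 * rho_r + rho_d + rho_s + 4 * rho_0 + 32 / 3 * (rho_0 / Tr).
have hD0 : 0 < D0.
  have : 0 < rho_0 / Tr by apply: divr_gt0.
  rewrite /D0; lra.
set S := 2 * pr + pd + ps + 4 * C0 * B + 32 / 3 * (C0 / Tc).
have hS : 0 < S.
  have : 0 < C0 / Tc by apply: divr_gt0.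
  have : 0 < C0 * B by apply: mulr_gt0.
  rewrite /S; lra.
have he : e = Gc / N0 * (Rt / D0).
  have hD0S : D0 = Gc / (N0 * B) * S.
    rewrite /D0 /S /rho_r /rho_d /rho_s /rho_0 hT.
    have hN : N0 != 0 by apply/negP => /eqP; lra.
    have hB0 : B != 0 by apply/negP => /eqP; lra.
    have hT0 : Tc != 0 by apply/negP => /eqP; lra.
    by field; rewrite ?hN ?hB0 ?hT0.
  rewrite /e -/S hD0S.
  have hN : N0 != 0 by apply/negP => /eqP; lra.
  have hB0 : B != 0 by apply/negP => /eqP; lra.
  have hG : Gc != 0 by apply/negP => /eqP; lra.
  have hS0 : S != 0 by apply/negP => /eqP; lra.
  by field; rewrite ?hN ?hB0 ?hG ?hS0.
set del := Num.min rho_r (alpha * ((2 `^ Rt - 1) / 2)).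
have hp1 := two_pow_gt1 hR.
have hdel : 0 < del.
  rewrite /del lt_min hr /=; apply: mulr_gt0; first lra.
  apply: divr_gt0; lra.
have hub : forall M K tau : nat, admissible M K tau T ->
    zeta_zf M K tau Rt alpha rho_r rho_d rho_s rho_0 Tr <= Rt / (D0 + del).
  move=> M K tau [hK [hKt [htT hKM]]].
  have ht1 : (1 <= tau)%N by apply: leq_trans hKt.
  have hg := gamma_ge0 hR hK hKM ht1 htT.
  have hD := @D_lb R alpha rho_r rho_d rho_s rho_0 Tr (gamma_u M K tau Rt Tr) M K ltac:(lra) hr hd hs h0 hTr hK hKM hg.
  rewrite /zeta_zf; apply: div_le; [exact: ltW | lra |].
  apply: le_trans hD.
  have : 0 <= alpha * K%:R * gamma_u M K tau Rt Tr.
    by apply: mulr_ge0 => //; apply: mulr_ge0; [lra | rewrite ler0n].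
  case: (ltnP 2 M) => hM.
    have hM3 : (3 : R) <= M%:R by rewrite ler_nat.
    have : del <= rho_r by rewrite /del ge_min lexx.
    have : 0 <= (M%:R - 3) * rho_r by apply: mulr_ge0; lra.
    rewrite /D0; lra.
  have eM : M = 2%N by apply/eqP; rewrite eqn_leq hM; apply: leq_ltn_trans hKM.
  have eK : K = 1%N by apply/eqP; rewrite eqn_leq hK andbT -ltnS -eM.
  subst M K.
  have hg2 := gamma_21_lb hR ht1 htT.
  have : del <= alpha * ((2 `^ Rt - 1) / 2) by rewrite /del ge_min lexx orbT.
  rewrite (_ : (2%:R : R) - 2 = 0); last by rewrite subrr.
  have : alpha * ((2 `^ Rt - 1) / 2) <= alpha * 1%:R * gamma_u 2 1 tau Rt Tr.
    by rewrite mulr1; apply: ler_wpM2l => //; lra.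
  rewrite /D0; lra.
set fl := Num.floor (Num.sqrt Tr) in hcond.
set tau0 := `|fl|%N.
have hfl0 : 0 <= fl by rewrite /fl floor_ge0 sqrtr_ge0.
have ht0 : (tau0%:R : R) = fl%:~R by rewrite /tau0 natr_absz ger0_norm.
have hsq1 : 1 < Num.sqrt Tr by rewrite -sqrtr1 ltr_sqrt //; lra.
have hsq2 : Num.sqrt Tr ^+ 2 = Tr by rewrite sqr_sqrtr //; lra.
have hfl1 : 1 <= (fl%:~R : R).
  have : (1 <= fl)%R by rewrite /fl floor_ge_int; lra.
  by rewrite -(ler_int R).
have hflT : (fl%:~R : R) < Tr.
  have : (fl%:~R : R) <= Num.sqrt Tr by apply: floor_le.
  move: hsq2; rewrite expr2; nra.
have htau1 : (1 <= tau0)%N by rewrite -(ler_nat R) ht0.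
have htauT : (tau0 < T)%N by rewrite -(ltr_nat R) ht0.
have hadm : admissible 2 1 tau0 T by rewrite /admissible.
set Zs := [set z : R | exists M K tau : nat, admissible M K tau T /\
        z = zeta_zf M K tau Rt alpha rho_r rho_d rho_s rho_0 Tr]%classic.
have hZub : ubound Zs (Rt / (D0 + del)).
  by move=> z [M [K [tau [hadm' ->]]]]; apply: hub.
have hzs : eta_star = Gc / N0 * sup Zs by [].
have hsup : sup Zs <= Rt / (D0 + del).
  apply: ge_sup => //; exists (zeta_zf 2 1 tau0 Rt alpha rho_r rho_d rho_s rho_0 Tr).
  by exists 2%N, 1%N, tau0.
have hz0 : zeta_zf 2 1 tau0 Rt alpha rho_r rho_d rho_s rho_0 Tr <= sup Zs.
  apply: ub_le_sup; first by exists (Rt / (D0 + del)).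
  by exists 2%N, 1%N, tau0.
have hGN : 0 < Gc / N0 by apply: divr_gt0.
split; last first.
  rewrite hzs he ltr_pM2l //; apply: le_lt_trans hsup _.
  by apply: div_lt => //; lra.
rewrite hzs he mulrCA ltr_pM2l //; apply: lt_le_trans hz0.
set s := (fl%:~R : R) in hcond hfl1 hflT ht0.
rewrite -/rho_r -/rho_0 in hcond.
have hg := gamma_21_ub hR htau1 htauT.
rewrite -/Tr in hg.
have hx : snr_term Rt 1 tau0 Tr = 2 `^ (Rt / (1 - s / Tr)) - 1.
  by rewrite /snr_term ht0 mul1r.
rewrite hx ht0 in hg.
set X := 2 `^ (Rt / (1 - s / Tr)) - 1 in hg hcond.
set g0 := gamma_u 2 1 tau0 Rt Tr in hg.
have hs0 : s != 0 by apply/negP => /eqP; lra.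
have hs1 : 1 + s != 0 by apply/negP => /eqP; lra.
have hag : alpha * g0 <= rho_r + 2 * rho_0.
  apply: le_trans hcond.
  have -> : alpha / (1 + s) + alpha * (1 + s) / s * X
     = alpha * ((1 + s) / s * X + 1 / (1 + s)) by field; rewrite hs0 hs1.
  by apply: ler_wpM2l => //; lra.
have hTr0 : Tr != 0 by apply/negP => /eqP; lra.
have hDz : alpha * 1%:R * g0 + rho_s + 1%:R * (rho_d + 8 * 1%:R ^+ 2 * rho_0 / (3 * Tr))
      + 2%:R * (rho_r + 2 * 1%:R * rho_0 + 4 * 1%:R ^+ 2 * rho_0 / Tr) = D0 + alpha * g0.
  by rewrite /D0; field; rewrite hTr0.
rewrite /zeta_zf -/g0 hDz.
have hrT : 0 < rho_0 / Tr by apply: divr_gt0.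
have -> : 2 / 3 * (Rt / D0) = Rt / (3 / 2 * D0) by field; apply/negP => /eqP; lra.
apply: div_lt => //.
  have : 0 <= alpha * g0.
    apply: mulr_ge0; first lra.
    by have := gamma_ge0 hR (leqnn 1) (ltnSn 1) htau1 htauT.
  lra.
rewrite /D0 in hag *; lra.
Qed.
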